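(* Let $p$ be prime, $\mathcal{A}=\mathbb{Z}/p$ and $D\ge1$. Then every nontrivial linear cellular automaton on $\mathcal{A}^{\mathbb{Z}^D}$ is diffusive in density.
   Context: For $\vec m\in\mathbb{Z}^D$, $(\sigma^{\vec m}\mathbf{a})_{\vec n}=a_{\vec m+\vec n}$. Every LCA on $\mathcal{A}^{\mathbb{Z}^D}$ has the form $\mathfrak{F}=\sum_{\vec u\in U}f_{\vec u}\sigma^{\vec u}$ with $U$ finite, $f_{\vec u}\in\mathbb{Z}/p$; it is nontrivial if at least two of the coefficients $f_{\vec u}$ are nonzero. Characters of $\mathcal{A}^{\mathbb{Z}^D}$ are $\chi=\bigotimes_{\vec n}\chi_{\vec n}$ with $\chi_{\vec n}$ characters of $\mathcal{A}$, all but finitely many trivial; rank$(\chi)$ is the number of nontrivial $\chi_{\vec n}$. $\mathfrak{F}$ is diffusive in density if for every nontrivial character $\chi$ there is $J_\chi\subset\mathbb{N}$ of Cesàro density 1 (i.e. $|J_\chi\cap[1,N]|/N\to1$) such that rank$(\chi\circ\mathfrak{F}^j)\to\infty$ as $j\to\infty$, $j\in J_\chi$. *)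

(* Defs.v *)
From mathcomp Require Import all_boot all_order all_algebra all_field.
Set Implicit Arguments. Unset Strict Implicit. Unset Printing Implicit Defensive.
Import Order.TTheory GRing.Theory Num.Theory.
Local Open Scope ring_scope.

Definition lattice (D : nat) := 'rV[int]_D.

Definition config (p D : nat) := lattice D -> 'F_p.

Definition shift (p D : nat) (m : lattice D) (a : config p D) : config p D :=
  fun n => a (m + n).

Definition lca (p D : nat) (U : seq (lattice D)) (f : lattice D -> 'F_p)
  (a : config p D) : config p D :=
  fun n => \sum_(u <- U) f u * shift u a n.

Definition nontrivial_lca (p D : nat) (U : seq (lattice D)) (f : lattice D -> 'F_p) : Prop :=
  exists u v, [/\ u \in U, v \in U, u != v, f u != 0 & f v != 0].

Definition is_charA (p : nat) (x : 'F_p -> algC) : Prop :=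
  x 0 = 1 /\ forall a b, x (a + b) = x a * x b.

Definition trivial_charA (p : nat) (x : 'F_p -> algC) : bool :=
  [forall a, x a == 1].

Definition char_family (p D : nat) (chi : lattice D -> 'F_p -> algC)
  (S : seq (lattice D)) : Prop :=
  [/\ uniq S, (forall n, is_charA (chi n))
    & (forall n, n \notin S -> trivial_charA (chi n))].

Definition char_eval (p D : nat) (chi : lattice D -> 'F_p -> algC)
  (S : seq (lattice D)) (a : config p D) : algC :=
  \prod_(n <- S) chi n (a n).

Definition fam_rank (p D : nat) (chi : lattice D -> 'F_p -> algC)
  (S : seq (lattice D)) : nat :=
  count (fun n => ~~ trivial_charA (chi n)) S.

Definition has_rank (p D : nat) (psi : config p D -> algC) (r : nat) : Prop :=
  exists chi S, [/\ char_family chi S,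
                    (forall a, psi a = char_eval chi S a)
                  & fam_rank chi S = r].

Definition density_one (J : nat -> bool) : Prop :=
  forall eps : rat, 0 < eps -> exists N0 : nat, forall N : nat, (N0 <= N)%N ->
    `| (count J (iota 1 N))%:R / N%:R - 1 | < eps.

Definition diffusive_in_density (p D : nat) (F : config p D -> config p D) : Prop :=
  forall (chi : lattice D -> 'F_p -> algC) (S : seq (lattice D)),
    char_family chi S -> (0 < fam_rank chi S)%N ->
    exists J : nat -> bool, density_one J /\
      forall M : nat, exists N0 : nat, forall j : nat, J j -> (N0 <= j)%N ->
        let psi := fun a => char_eval chi S (iter j F a) in
        (exists r, has_rank psi r) /\ (forall r, has_rank psi r -> (M <= r)%N).

(* Main.v *)
Require Import Defs.
From mathcomp Require Import all_boot all_order all_algebra all_field.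
From mathcomp Require Import zify ring lra.
From Stdlib Require Import FunctionalExtensionality.
Set Implicit Arguments. Unset Strict Implicit. Unset Printing Implicit Defensive.
Import Order.TTheory GRing.Theory Num.Theory.

Definition Gt (Q : nat) (good : nat -> bool) (j t : nat) : nat :=
  count (fun i => good (j %/ Q ^ i %% Q)) (iota 0 t).
Definition bad Q good t s := count (fun j => Gt Q good j t < s) (iota 0 (Q ^ t)).

Lemma count_iota_mul (P : pred nat) a n :
  count P (iota 0 (a * n)) = \sum_(x < n) count (fun v => P (v + a * x)) (iota 0 a).
Proof.
elim: n => [|n IH]; first by rewrite muln0 big_ord0.
rewrite big_ord_recr /= -IH mulnS addnC iotaD count_cat add0n.
congr (_ + _).
have -> : iota (a*n) a = map (addn (a*n)) (iota 0 a) by rewrite -iotaDl addn0.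
rewrite count_map; apply: eq_count => v /=. by rewrite addnC.
Qed.

Lemma digit_low Q v x t i : 0 < Q -> i < t ->
  (v + Q ^ t * x) %/ Q ^ i %% Q = v %/ Q ^ i %% Q.
Proof.
move=> Q0 it.
have -> : Q ^ t * x = (Q * Q ^ (t-i.+1) * x) * Q ^ i.
  by rewrite [RHS]mulnC !mulnA -expnSr -expnD; congr (Q ^ _ * x); lia.
rewrite addnC divnMDl ?expn_gt0 ?Q0 //.
by rewrite -mulnA mulnC modnMDl.
Qed.

Lemma digit_top Q v x t : v < Q ^ t -> x < Q ->
  (v + Q ^ t * x) %/ Q ^ t %% Q = x.
Proof.
move=> vt xQ.
have Q0 : 0 < Q by lia.
by rewrite addnC mulnC divnMDl ?expn_gt0 ?Q0 // divn_small // addn0 modn_small.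
Qed.

Lemma Gt_split Q good v x t : 0 < Q -> v < Q ^ t -> x < Q ->
  Gt Q good (v + Q ^ t * x) t.+1 = Gt Q good v t + good x.
Proof.
move=> Q0 vt xQ; rewrite /Gt -addn1 iotaD count_cat /= add0n digit_top // addn0.
congr (_ + _); apply: eq_in_count => i; rewrite mem_iota add0n => /andP[_ it].
by rewrite digit_low.
Qed.

Lemma Gt_small Q good j t t' : 1 < Q -> good 0 = false -> j < Q ^ t -> t <= t' ->
  Gt Q good j t' = Gt Q good j t.
Proof.
move=> Q1 g0 jt tt'; rewrite /Gt -(subnKC tt') iotaD count_cat add0n.
rewrite [X in _ + X](_ : _ = 0) ?addn0 //.
apply/eqP; rewrite -leqn0 leqNgt -has_count; apply/hasPn => i.
rewrite mem_iota => /andP[ti _].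
rewrite divn_small ?mod0n ?g0 //.
by apply: (leq_trans jt); rewrite leq_exp2l.
Qed.

Lemma bad_rec Q good t s : 0 < Q ->
  bad Q good t.+1 s.+1 = \sum_(x < Q) (if good x then bad Q good t s else bad Q good t s.+1).
Proof.
move=> Q0; rewrite /bad expnSr count_iota_mul; apply: eq_bigr => x _.
case E: (good x); apply: eq_in_count => v; rewrite mem_iota add0n => /andP[_ vt] /=;
  rewrite Gt_split // E /=; lia.
Qed.

Lemma count_le_in (T : eqType) (P P' : pred T) (s : seq T) :
  (forall x, x \in s -> P x -> P' x) -> count P s <= count P' s.
Proof.
elim: s => //= a s IH H; apply: leq_add; last by apply: IH => x xs; apply: H; rewrite inE xs orbT.
by case: (P a) (H a (mem_head _ _)) => // ->.
Qed.

Lemma bad_le Q good t s : 0 < Q -> bad Q good t.+1 s <= Q * bad Q good t s.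
Proof.
move=> Q0; rewrite /bad expnSr count_iota_mul.
rewrite -[X in X * _]card_ord -sum_nat_const; apply: leq_sum => x _.
apply: count_le_in => v; rewrite mem_iota add0n => /andP[_ vt] /=.
rewrite Gt_split //; lia.
Qed.
Local Open Scope ring_scope.
Lemma prod_le1 (q : rat) (n : nat) : 0 < q <= 1 -> (1 - q) ^+ n * (1 + q) ^+ n <= 1.
Proof.
move=> /andP[q0 q1].
rewrite -exprMn; apply: exprn_ile1.
  have hq : (1 - q) * (1 + q) = 1 - q * q by ring.
  by rewrite hq; have := mulr_ge0 (ltW q0) (ltW q0); have := ler_pM (ltW q0) (ltW q0) q1 q1; lra.
have hq : (1 - q) * (1 + q) = 1 - q * q by ring.
rewrite hq; have := mulr_ge0 (ltW q0) (ltW q0); lra.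
Qed.
Lemma bernoulli (q : rat) (n : nat) : 0 <= q -> 1 + n%:R * q <= (1 + q) ^+ n.
Proof.
move=> q0; elim: n => [|n IH]; first by rewrite expr0 mul0r addr0.
rewrite exprS -natr1.
move: IH; set X := (1 + q) ^+ n; set N := n%:R => IH.
have h1 : 0 <= N * q by apply: mulr_ge0 => //; rewrite /N ler0n.
have h3 : 0 <= q * (X - 1) by apply: mulr_ge0 => //; lra.
nra.
Qed.

Lemma geom_n (q eps : rat) (n : nat) : 0 < q <= 1 -> 0 < eps -> 1 < eps * q * n%:R ->
  (1 - q) ^+ n <= eps.
Proof.
move=> qq e0 h1; have /andP[q0 q1] := qq.
have hb := bernoulli n (ltW q0).
have hm := prod_le1 n qq.
have h0 : 0 <= (1 - q) ^+ n by apply: exprn_ge0; lra.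
have hB0 : 0 < (1 + q) ^+ n by apply: exprn_gt0; lra.
move: hb hm h0 hB0 h1; set N := _%:R; set A := (1 - q) ^+ _; set B := (1 + q) ^+ _.
move=> hb hm h0 hB0 h1.
have e1 : eps * (1 + N * q) <= eps * B by rewrite ler_pM2l.
have e2 : eps * (1 + N * q) = eps + eps * q * N by ring.
have e3 : A * B < eps * B by apply: le_lt_trans hm _; lra.
move: e3; rewrite ltr_pM2r //; exact: ltW.
Qed.

Lemma geom_small (q eps : rat) : 0 < q <= 1 -> 0 < eps ->
  exists n : nat, (1 - q) ^+ n <= eps.
Proof.
move=> qq e0; have /andP[q0 q1] := qq.
have eq0 : 0 < eps * q by apply: mulr_gt0.
have b0 : 0 <= (eps * q)^-1 by rewrite invr_ge0 ltW.
have hn := archi_boundP b0.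
move: hn; set n := Num.Def.archi_bound _ => hn; clearbody n.
exists n; apply: geom_n => //.
by rewrite -[X in X < _](mulfV (lt0r_neq0 eq0)) ltr_pM2l.
Qed.

Lemma decay (x y : nat -> rat) (q : rat) : 0 < q <= 1 -> (forall t, 0 <= x t <= 1) ->
  (forall t, x t.+1 <= (1 - q) * x t + q * y t) ->
  (forall eps, 0 < eps -> exists T, forall t, (T <= t)%N -> y t <= eps) ->
  forall eps, 0 < eps -> exists T, forall t, (T <= t)%N -> x t <= eps.
Proof.
move=> qq hx hr hy eps e0; have /andP[q0 q1] := qq.
have e2 : 0 < eps / 2 by apply: divr_gt0.
have [T1 hT1] := hy _ e2.
have key : forall n, x (T1 + n)%N - eps / 2 <= (1 - q) ^+ n.
  elim=> [|n IH]; first by rewrite addn0 expr0; have := hx T1; lra.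
  rewrite addnS exprS.
  have h1 := hr (T1 + n)%N; have h2 := hT1 (T1 + n)%N (leq_addr _ _).
  have a1 : q * y (T1 + n)%N <= q * (eps / 2) by rewrite ler_wpM2l // ltW.
  have a2 : (1 - q) * (x (T1 + n)%N - eps / 2) <= (1 - q) * (1 - q) ^+ n.
    by rewrite ler_wpM2l //; lra.
  move: h1 a1 a2; set X := x _; set Y := y _; set X' := x _; set Z := (1 - q) ^+ n.
  move=> h1 a1 a2.
  have r1 : (1 - q) * (X - eps / 2) = (1 - q) * X - eps / 2 + q * (eps / 2) by ring.
  lra.
have [n hn] := geom_small qq e2.
exists (T1 + n)%N => t ht.
have := key (t - T1)%N; rewrite subnKC; last by apply: leq_trans ht; exact: leq_addr.
have : (1 - q) ^+ (t - T1) <= (1 - q) ^+ n.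
  apply: ler_wiXn2l; [lra|lra|].
  lia.
lra.
Qed.

Local Open Scope ring_scope.

Lemma sum_if (Q : nat) (good : nat -> bool) (A B : nat) :
  (\sum_(x < Q) (if good x then A else B) =
   (\sum_(x < Q) (good x : nat)) * A + (Q - \sum_(x < Q) (good x : nat)) * B)%N.
Proof.
have e : (\sum_(x < Q) (good x : nat) + \sum_(x < Q) (~~ good x : nat) = Q)%N.
  rewrite -big_split /= -[X in _ = X]card_ord -sum1_card; apply: eq_bigr => x _.
  by case: (good x).
move: e; set g := (\sum_(x < Q) (good x : nat))%N => e.
have -> : (Q - g = \sum_(x < Q) (~~ good x : nat))%N by rewrite -[in LHS]e addKn.
rewrite !big_distrl /= -big_split /=; apply: eq_bigr => x _.
by case: (good x) => /=; rewrite ?mul1n ?mul0n ?addn0.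
Qed.

Definition beta (Q : nat) (good : nat -> bool) (t s : nat) : rat := (bad Q good t s)%:R / (Q ^ t)%:R.

Lemma bad_size (Q : nat) (good : nat -> bool) (t s : nat) : (bad Q good t s <= Q ^ t)%N.
Proof. by rewrite /bad -[X in (_ <= X)%N](size_iota 0) count_size. Qed.

Lemma beta_bounds (Q : nat) (good : nat -> bool) (t s : nat) : (0 < Q)%N -> 0 <= beta Q good t s <= 1.
Proof.
move=> Q0; rewrite /beta divr_ge0 ?ler0n //=.
by rewrite ler_pdivrMr ?ltr0n ?expn_gt0 ?Q0 // mul1r ler_nat bad_size.
Qed.

Lemma beta_rec (Q : nat) (good : nat -> bool) (t s : nat) : (0 < Q)%N ->
  let g := (\sum_(x < Q) (good x : nat))%N in
  beta Q good t.+1 s.+1 = (1 - g%:R / Q%:R) * beta Q good t s.+1 + (g%:R / Q%:R) * beta Q good t s.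
Proof.
move=> Q0 g.
have gQ : (g <= Q)%N.
  rewrite /g -[X in (_ <= X)%N]card_ord -sum1_card; apply: leq_sum => x _; by case: (good x).
rewrite /beta bad_rec // sum_if -/g natrD !natrM natrB // expnSr natrM.
have h1 : (Q%:R : rat) != 0 by rewrite pnatr_eq0 -lt0n.
have h2 : ((Q ^ t)%:R : rat) != 0 by rewrite pnatr_eq0 -lt0n expn_gt0 Q0.
by field; apply/andP; split.
Qed.

Lemma bad0 (Q : nat) (good : nat -> bool) (t : nat) : bad Q good t 0 = 0%N.
Proof. by rewrite /bad; apply/eqP; rewrite -leqn0 leqNgt -has_count; apply/hasPn. Qed.

Lemma beta_lim (Q : nat) (good : nat -> bool) : (0 < Q)%N -> (0 < \sum_(x < Q) (good x : nat))%N ->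
  forall s eps, 0 < eps -> exists T, forall t, (T <= t)%N -> beta Q good t s <= eps.
Proof.
move=> Q0 g0; elim=> [|s IH] eps e0.
  by exists 0%N => t _; rewrite /beta bad0 mul0r ltW.
set g := (\sum_(x < Q) (good x : nat))%N.
have gQ : (g <= Q)%N.
  rewrite /g -[X in (_ <= X)%N]card_ord -sum1_card; apply: leq_sum => x _; by case: (good x).
apply: (@decay (fun t => beta Q good t s.+1) (fun t => beta Q good t s) (g%:R / Q%:R)) => //.
- rewrite divr_gt0 ?ltr0n //= ler_pdivrMr ?ltr0n // mul1r ler_nat //.
- by move=> t; apply: beta_bounds.
- by move=> t; rewrite beta_rec // -/g addrC.
Qed.

Local Close Scope ring_scope.

Fixpoint lastsat (c : nat -> bool) (n : nat) : nat :=
  if n is n'.+1 then (if c n then n else lastsat c n') else 0.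

Lemma lastsat_c (c : nat -> bool) (n : nat) : c 0 -> c (lastsat c n).
Proof. by move=> c0; elim: n => //= n IH; case E: (c n.+1). Qed.

Lemma lastsat_le (c : nat -> bool) (n : nat) : lastsat c n <= n.
Proof. by elim: n => //= n IH; case: (c n.+1) => //; apply: leq_trans IH _. Qed.

Lemma lastsat_max (c : nat -> bool) (n s : nat) : s <= n -> c s -> s <= lastsat c n.
Proof.
elim: n => [|n IH] /=; first by rewrite leqn0 => /eqP ->.
case E: (c n.+1) => // sn cs; apply: IH => //.
rewrite leq_eqVlt in sn; case/orP: sn => // /eqP es; by rewrite es E in cs.
Qed.

Definition sigm (Q : nat) (good : nat -> bool) (t : nat) : nat :=
  lastsat (fun s => bad Q good t s * s.+1 <= Q ^ t) t.

Lemma sig_spec (Q : nat) (good : nat -> bool) t : bad Q good t (sigm Q good t) * (sigm Q good t).+1 <= Q ^ t.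
Proof. by apply: (lastsat_c (c := fun s => bad Q good t s * s.+1 <= Q ^ t)); rewrite bad0. Qed.

Lemma cond_step (Q : nat) (good : nat -> bool) t s : 0 < Q ->
  bad Q good t s * s.+1 <= Q ^ t -> bad Q good t.+1 s * s.+1 <= Q ^ t.+1.
Proof.
move=> Q0 h; apply: (leq_trans (leq_mul (bad_le _ _ _ Q0) (leqnn _))).
by rewrite -mulnA expnS leq_mul2l h orbT.
Qed.

Lemma sig_step (Q : nat) (good : nat -> bool) t : 0 < Q -> sigm Q good t <= sigm Q good t.+1.
Proof.
move=> Q0; apply: lastsat_max; first by apply: leq_trans (lastsat_le _ _) _.
by apply: cond_step => //; apply: sig_spec.
Qed.

Lemma sig_mono (Q : nat) (good : nat -> bool) t t' : 0 < Q -> t <= t' -> sigm Q good t <= sigm Q good t'.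
Proof.
move=> Q0 /subnKC <-; elim: (t' - t) => [|k IH]; first by rewrite addn0.
by apply: leq_trans IH _; rewrite addnS sig_step.
Qed.

Lemma sig_unb (Q : nat) (good : nat -> bool) : 0 < Q -> 0 < \sum_(x < Q) (good x : nat) ->
  forall s, exists t, s <= sigm Q good t.
Proof.
move=> Q0 g0 s.
have e0 : (0 < (s.+1%:R : rat)^-1)%R by rewrite invr_gt0 ltr0n.
have [T hT] := beta_lim Q0 g0 s e0.
exists (maxn T s); apply: lastsat_max; first exact: leq_maxr.
have := hT (maxn T s) (leq_maxl _ _); rewrite /beta.
rewrite ler_pdivrMr ?ltr0n ?expn_gt0 ?Q0 // => h.
rewrite -(ler_nat rat) natrM; apply: le_trans (ler_wpM2r (ler0n _ _) h) _.
by rewrite mulrC mulrA mulfV ?mul1r // pnatr_eq0.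
Qed.

Lemma count_sub (P P' : pred nat) (s1 s2 : seq nat) : uniq s1 ->
  (forall x, x \in s1 -> P x -> (x \in s2) && P' x) -> count P s1 <= count P' s2.
Proof.
move=> u h; rewrite -!size_filter; apply: uniq_leq_size; first exact: filter_uniq.
by move=> x; rewrite !mem_filter => /andP[Px xs]; have /andP[-> ->] := h x xs Px.
Qed.

Lemma dens_main (Q : nat) (good : nat -> bool) : 1 < Q -> good 0 = false ->
  0 < \sum_(x < Q) (good x : nat) ->
  exists J : nat -> bool, density_one J /\
    forall M, exists N0, forall j, J j -> N0 <= j -> exists n, M <= Gt Q good j n.
Proof.
move=> Q1 g0 gpos; have Q0 : 0 < Q by lia.
pose tau := fun j => (trunc_log Q j).+1.
have tauP : forall j, j < Q ^ tau j by move=> j; apply: trunc_log_ltn.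
have tau_ge : forall t j, Q ^ t <= j -> t < tau j.
  by move=> t j h; rewrite -(ltn_exp2l _ _ Q1); apply: leq_ltn_trans h (tauP j).
pose J := fun j => sigm Q good (tau j) <= Gt Q good j (tau j).
exists J; split; last first.
  move=> M; have [t ht] := sig_unb Q0 gpos M.
  exists (Q ^ t) => j Jj hj; exists (tau j).
  apply: leq_trans ht (leq_trans _ Jj); apply: sig_mono => //; apply: ltnW; exact: tau_ge.
move=> eps e0.
have b0 : (0 <= Q%:R / eps :> rat)%R by rewrite divr_ge0 ?ler0n // ltW.
have hA := archi_boundP b0.
move: hA; set A := Num.Def.archi_bound _ => hA; clearbody A.
have [t0 ht0] := sig_unb Q0 gpos A.
exists (Q ^ t0) => N hN.
have N0 : 0 < N by apply: leq_trans hN; rewrite expn_gt0 Q0.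
set t := tau N.
set c := count (predC J) (iota 1 N).
have hc : c <= bad Q good t (sigm Q good t).
  apply: count_sub; first exact: iota_uniq.
  move=> j; rewrite mem_iota => /andP[j1 jN] /= nJ.
  have jN' : j <= N by lia.
  rewrite mem_iota add0n (leq_ltn_trans jN' (tauP N)) /=.
  have tj : tau j <= t by rewrite /t /tau ltnS leq_trunc_log.
  rewrite (@Gt_small Q good j (tau j) t Q1 g0 (tauP j) tj).
  rewrite /J -ltnNge in nJ; apply: leq_trans nJ _; exact: sig_mono.
have hc2 : c * (sigm Q good t).+1 <= Q * N.
  apply: leq_trans (leq_mul hc (leqnn _)) _; apply: leq_trans (sig_spec _ _ _) _.
  by rewrite /t /tau expnS leq_mul2l (trunc_logP Q1 N0) orbT.
have hs : A <= sigm Q good t.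
  apply: leq_trans ht0 _; apply: sig_mono => //; apply: ltnW; exact: tau_ge.
have hcount : count J (iota 1 N) = N - c.
  by rewrite -[X in _ = X - _](size_iota 1) -(count_predC J) addnK.
rewrite hcount.
have cN : c <= N by rewrite -[X in _ <= X](size_iota 1); apply: count_size.
rewrite natrB // (_ : ((N%:R - c%:R) / N%:R - 1 = - (c%:R / N%:R) :> rat)%R); last first.
  by field; rewrite pnatr_eq0 -lt0n.
rewrite normrN ger0_norm ?divr_ge0 ?ler0n //.
rewrite ltr_pdivrMr ?ltr0n //.
move: hc2 hs hA; set S := sigm Q good t => hc2 hs hA.
have h1 : (Q%:R < eps * (S.+1)%:R :> rat)%R.
  rewrite ltr_pdivrMr // in hA; rewrite mulrC; apply: lt_le_trans hA _.
  by rewrite ler_pM2r // ler_nat; lia.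
have h2 : ((c * S.+1)%:R <= (Q * N)%:R :> rat)%R by rewrite ler_nat.
rewrite !natrM in h2.
have h3 : (Q%:R * N%:R < eps * (S.+1)%:R * N%:R :> rat)%R by rewrite ltr_pM2r ?ltr0n.
have h4 : (c%:R * (S.+1)%:R < eps * N%:R * (S.+1)%:R :> rat)%R.
  by apply: le_lt_trans h2 _; rewrite mulrAC.
by rewrite ltr_pM2r ?ltr0n in h4.
Qed.

Local Open Scope ring_scope.

Definition supp (p : nat) (R : {poly 'F_p}) : seq nat :=
  filter (fun i => R`_i != 0) (iota 0 (size R)).
Definition cnt (p : nat) (R : {poly 'F_p}) : nat := size (supp R).

Lemma supp_uniq p (R : {poly 'F_p}) : uniq (supp R).
Proof. by rewrite filter_uniq // iota_uniq. Qed.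

Lemma mem_supp p (R : {poly 'F_p}) i : (i \in supp R) = (R`_i != 0).
Proof.
rewrite mem_filter mem_iota add0n /=; case E: (R`_i != 0) => //=.
by rewrite ltnNge; apply/negP => h; move: E; rewrite nth_default ?eqxx.
Qed.

Lemma cnt_ge p (R : {poly 'F_p}) (s : seq nat) : uniq s ->
  (forall i, i \in s -> R`_i != 0) -> (size s <= cnt R)%N.
Proof. by move=> us h; apply: uniq_leq_size => // i /h; rewrite mem_supp. Qed.

Lemma polyXn_comp (p : nat) (n : nat) (q : {poly 'F_p}) : 'X^n \Po q = q ^+ n.
Proof.
elim: n => [|n IH]; first by rewrite !expr0 comp_polyC.
by rewrite exprS comp_polyM comp_polyX IH -exprS.
Qed.

Lemma frob (p : nat) (Q : {poly 'F_p}) : prime p -> Q ^+ p = Q \Po 'X^p.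
Proof.
move=> pp.
have chP : p \in [pchar {poly 'F_p}] by rewrite pchar_poly pchar_Fp.
have fe : forall x : 'F_p, x ^+ p = x.
  by move=> x; have := expf_card x; rewrite card_Fp.
rewrite comp_polyE -{1}(coefK Q) poly_def.
rewrite -(pFrobenius_autE chP) raddf_sum /=; apply: eq_bigr => i _.
by rewrite pFrobenius_autE exprZn fe -exprM mulnC exprM.
Qed.

Lemma frobk (p : nat) (Q : {poly 'F_p}) k : prime p -> Q ^+ (p ^ k) = Q \Po 'X^(p ^ k).
Proof.
move=> pp; elim: k => [|k IH]; first by rewrite expn0 expr1 comp_polyXr.
rewrite expnSr exprM IH frob // -comp_polyA polyXn_comp -exprM; congr (_ \Po _ ^+ _); exact: mulnC.
Qed.

Lemma coef_sep p (Q R : {poly 'F_p}) K i t : (0 < K)%N -> (size Q <= K)%N -> (i < K)%N ->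
  (Q * (R \Po 'X^K))`_(i + K * t) = Q`_i * R`_t.
Proof.
move=> K0 sQ iK.
have io : (i < (i + K * t).+1)%N by rewrite ltnS leq_addr.
rewrite coefM (bigD1 (Ordinal io)) //= addKn coef_comp_poly_Xn // dvdn_mulr // mulKn //.
rewrite big1 ?addr0 // => j /= hj.
have hj' : (nat_of_ord j != i) by move: hj; apply: contra => /eqP e; apply/eqP/val_inj.
case: (ltnP j (size Q)) => hjs; last by rewrite nth_default // mul0r.
rewrite coef_comp_poly_Xn //; case: ifP => [hdiv|]; last by rewrite mulr0.
have jK : (j < K)%N by apply: leq_trans hjs sQ.
have jle : (j <= i + K * t)%N by rewrite -ltnS ltn_ord.
exfalso; clear hj hjs; move: hj' jK jle hdiv; move: (nat_of_ord j) => jj hj' jK jle hdiv.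
case: (ltnP jj i) => ji.
  have e : (i + K * t - jj = K * t + (i - jj))%N by lia.
  rewrite e dvdn_addr ?dvdn_mulr // in hdiv.
  have := dvdn_leq (_ : (0 < i - jj)%N) hdiv; lia.
have ij : (i < jj)%N by rewrite ltn_neqAle eq_sym hj' ji.
have [t0|tpos] := posnP t; first by move: jle; rewrite t0 muln0 addn0; lia.
have eK : (K * t = K * t.-1 + K)%N by rewrite -mulnSr prednK.
have e : (i + K * t - jj = K * t.-1 + (K + i - jj))%N by lia.
rewrite e dvdn_addr ?dvdn_mulr // in hdiv.
have := dvdn_leq (_ : (0 < K + i - jj)%N) hdiv; lia.
Qed.

Lemma supp_lt p (Q : {poly 'F_p}) i : i \in supp Q -> (i < size Q)%N.
Proof. by rewrite mem_filter mem_iota add0n => /andP[_ /andP[_ ->]]. Qed.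

Lemma divK_small K i t : (0 < K)%N -> (i < K)%N -> ((i + K * t) %/ K = t)%N.
Proof. by move=> K0 iK; rewrite addnC mulnC divnMDl // divn_small // addn0. Qed.

Lemma sep_cnt p (Q R : {poly 'F_p}) K t1 t2 : (0 < K)%N -> (size Q <= K)%N -> t1 != t2 ->
  R`_t1 != 0 -> R`_t2 != 0 -> (2 * cnt Q <= cnt (Q * (R \Po 'X^K)))%N.
Proof.
move=> K0 sQ t12 r1 r2.
have lt : forall i, i \in supp Q -> (i < K)%N.
  by move=> i /supp_lt h; apply: leq_trans h sQ.
set s := [seq i + K * t1 | i <- supp Q] ++ [seq i + K * t2 | i <- supp Q].
have -> : (2 * cnt Q = size s)%N by rewrite /s size_cat !size_map /cnt mul2n -addnn.
apply: cnt_ge.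
  rewrite cat_uniq !map_inj_uniq ?supp_uniq //; try exact: addIn.
  rewrite andbT; apply/hasPn => x /mapP[i hi ->]; apply/mapP => [[i' hi' e]].
  have h1 := @divK_small K i t2 K0 (lt _ hi).
  have h2 := @divK_small K i' t1 K0 (lt _ hi').
  have := congr1 (fun n => (n %/ K)%N) e; rewrite /= h1 h2 => e2.
  by move: t12; rewrite e2 eqxx.
move=> x; rewrite mem_cat => /orP[] /mapP[i hi ->];
  by rewrite coef_sep // ?(lt _ hi) // mulf_neq0 // -mem_supp.
Qed.

Lemma coef0_exp p (P : {poly 'F_p}) b : (P ^+ b)`_0 = P`_0 ^+ b.
Proof.
elim: b => [|b IH]; first by rewrite !expr0 coefC.
by rewrite !exprS coef0M IH.
Qed.

Lemma dbl p (C P : {poly 'F_p}) a b k : prime p -> C != 0 -> P`_0 != 0 -> (1 < size P)%N ->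
  (0 < b)%N -> (size C + (size P).-1 * a <= p ^ k)%N ->
  (2 * cnt (C * P ^+ a) <= cnt (C * P ^+ (a + p ^ k * b)))%N.
Proof.
move=> pp C0 P0 sP b0 hs.
have Pn0 : P != 0 by rewrite -size_poly_eq0 -lt0n; apply: ltnW.
rewrite exprD (mulnC (p ^ k)%N) exprM frobk // mulrA.
have Pa0 : P ^+ a != 0 by rewrite expf_neq0.
have Pb0 : P ^+ b != 0 by rewrite expf_neq0.
apply: (@sep_cnt _ _ _ _ 0 ((size P).-1 * b)).
- by rewrite expn_gt0 prime_gt0.
- rewrite size_mul // -(prednK (_ : 0 < size (P ^+ a))%N); last by rewrite lt0n size_poly_eq0.
  by rewrite size_exp addnS.
- rewrite eq_sym -lt0n muln_gt0 b0 andbT; lia.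
- by rewrite coef0_exp expf_neq0.
- have := lead_coef_exp P b; rewrite /lead_coef size_exp => ->.
  by rewrite expf_neq0 // -/(lead_coef P) lead_coef_eq0.
Qed.

Lemma count_sub' (P P' : pred nat) (s1 s2 : seq nat) : uniq s1 ->
  (forall x, x \in s1 -> P x -> (x \in s2) && P' x) -> (count P s1 <= count P' s2)%N.
Proof.
move=> u h; rewrite -!size_filter; apply: uniq_leq_size; first exact: filter_uniq.
by move=> x; rewrite !mem_filter => /andP[Px xs]; have /andP[-> ->] := h x xs Px.
Qed.

Lemma count_split (a b : pred nat) (s : seq nat) :
  (count a s <= count (fun x => b x && a x) s + count (predC b) s)%N.
Proof. elim: s => //= x s IH; case: (a x); case: (b x) => /=; lia. Qed.

Lemma cnt_pos p (R : {poly 'F_p}) : R != 0 -> (0 < cnt R)%N.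
Proof.
move=> R0; apply: (@cnt_ge _ _ [:: (size R).-1]) => // i; rewrite inE => /eqP ->.
by rewrite -/(lead_coef R) lead_coef_eq0.
Qed.

Lemma poly_main p (C P : {poly 'F_p}) : prime p -> C != 0 -> P`_0 != 0 -> (1 < size P)%N ->
  exists (Q : nat) (good : nat -> bool) (i0 : nat), [/\ (1 < Q)%N, good 0 = false,
    (0 < \sum_(x < Q) (good x : nat))%N &
    forall j n, (2 ^ (Gt Q good j n - i0) <= cnt (C * P ^+ j))%N].
Proof.
move=> pp C0 P0 sP.
have p1 : (1 < p)%N by apply: prime_gt1.
have Pn0 : P != 0 by rewrite -size_poly_eq0 -lt0n; apply: ltnW.
set d := (size P).-1; set m := d.+1; set L := m.+1.
pose Q := (p ^ L)%N.
pose good := fun v : nat => (v %% p ^ m == 0)%N && (v != 0)%N.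
pose i0 := size C.
have Q1 : (1 < Q)%N by rewrite /Q -{1}(expn0 p) ltn_exp2l.
have Q0 : (0 < Q)%N by apply: ltnW.
exists Q, good, i0; split => //.
  by rewrite /good andbF.
  have hm : (p ^ m < Q)%N by rewrite /Q ltn_exp2l.
  have pm0 : (p ^ m != 0)%N by rewrite -lt0n expn_gt0 prime_gt0.
  by rewrite (bigD1 (Ordinal hm)) //= /good modnn eqxx pm0.
pose G' := fun j n => count (fun i => (i0 <= i)%N && good (j %/ Q ^ i %% Q)%N) (iota 0 n).
have A : forall n j, (2 ^ G' j n <= cnt (C * P ^+ j))%N.
  elim=> [|n IH] j; first by rewrite /G' /= expn0 cnt_pos // mulf_neq0 // expf_neq0.
  rewrite /G' -(addn1 n) iotaD count_cat add0n /= -/(G' j n).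
  case E: ((i0 <= n)%N && good (j %/ Q ^ n %% Q)%N); last by rewrite addn0 addn0 IH.
  move/andP: E => [i0n /andP[/eqP vm v0]].
  set a := (j %% Q ^ n)%N; set w := (j %/ Q ^ n)%N.
  set v := (w %% Q)%N; set x := (v %/ p ^ m)%N; set w' := (w %/ Q)%N.
  rewrite -/w -/v in vm v0.
  have ej : j = (a + Q ^ n * w)%N by rewrite /a /w addnC mulnC -divn_eq.
  have ew : w = (v + Q * w')%N by rewrite /v /w' addnC mulnC -divn_eq.
  have ev : v = (p ^ m * x)%N by rewrite /x mulnC {1}(divn_eq v (p ^ m)) vm addn0.
  have x0 : (0 < x)%N by move: v0; rewrite ev muln_eq0 negb_or lt0n => /andP[_].
  have eQn : (Q ^ n = p ^ (L * n))%N by rewrite /Q expnM.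
  have eQ : (Q = p ^ m * p)%N by rewrite /Q /L expnSr.
  have ej2 : j = (a + p ^ (L * n + m) * (x + p * w'))%N.
    by rewrite {1}ej ew ev eQn eQ expnD; ring.
  have hdbl : (2 * cnt (C * P ^+ a) <= cnt (C * P ^+ j))%N.
    rewrite [in X in (_ <= cnt (_ * _ ^+ X))%N]ej2; apply: dbl => //; first lia.
    have aX : (a < p ^ (L * n))%N by rewrite -eQn /a ltn_mod expn_gt0 Q0.
    have cX : (size C <= p ^ (L * n))%N.
      apply: (leq_trans i0n); apply: (leq_trans (ltnW (ltn_expl n p1))).
      by rewrite leq_exp2l // leq_pmull.
    have mY : (m <= p ^ m)%N by apply: ltnW; apply: ltn_expl.
    rewrite expnD; apply: (@leq_trans (m * p ^ (L * n))); last by rewrite mulnC leq_mul2l mY orbT.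
    have : (d * a <= d * p ^ (L * n))%N by rewrite leq_mul2l ltnW ?orbT.
    rewrite /m mulSn; lia.
  have eG : G' a n = G' j n.
    apply: eq_in_count => i; rewrite mem_iota add0n => /andP[_ ilt].
    by rewrite ej digit_low.
  rewrite expnD expn1 muln2 -addnn; apply: leq_trans hdbl; rewrite -eG mul2n -addnn.
  by apply: leq_add; apply: IH.
move=> j n; apply: leq_trans (A n j); rewrite leq_exp2l // leq_subLR addnC.
apply: leq_trans (count_split _ (fun i => i0 <= i)%N _) _; rewrite leq_add2l.
apply: (@leq_trans (count predT (iota 0 i0))); last by rewrite count_predT size_iota.
apply: count_sub'; first exact: iota_uniq.
by move=> i _ /=; rewrite -ltnNge mem_iota add0n => ->.
Qed.

Local Close Scope ring_scope.
Local Open Scope ring_scope.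

Definition cadd (p D : nat) (a b : config p D) : config p D := fun n => a n + b n.
Definition czero (p D : nat) : config p D := fun _ => 0.
Definition delta (p D : nat) (m : lattice D) (x : 'F_p) : config p D :=
  fun n => if n == m then x else 0.

Definition mhom (p D : nat) (psi : config p D -> algC) :=
  psi (@czero p D) = 1 /\ forall a b, psi (cadd a b) = psi a * psi b.

Lemma charA0 (p : nat) (x : 'F_p -> algC) : is_charA x -> x 0 = 1.
Proof. by case. Qed.
Lemma charAD (p : nat) (x : 'F_p -> algC) a b : is_charA x -> x (a + b) = x a * x b.
Proof. by case=> _ ->. Qed.

Lemma charA_sum (p : nat) (T : Type) (x : 'F_p -> algC) (s : seq T) (g : T -> 'F_p) :
  is_charA x -> x (\sum_(t <- s) g t) = \prod_(t <- s) x (g t).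
Proof.
move=> hx; elim: s => [|t s IH]; first by rewrite !big_nil charA0.
by rewrite !big_cons charAD // IH.
Qed.

Lemma char_eval_mhom (p D : nat) (chi : lattice D -> 'F_p -> algC) S :
  (forall n, is_charA (chi n)) -> mhom (char_eval chi S).
Proof.
move=> hc; split.
  by rewrite /char_eval big1_seq // => n _; rewrite /czero charA0.
by move=> a b; rewrite /char_eval -big_split /=; apply: eq_bigr => n _; rewrite /cadd charAD.
Qed.

Lemma lca_add (p D : nat) (U : seq (lattice D)) (f : lattice D -> 'F_p) a b :
  lca U f (cadd a b) = cadd (lca U f a) (lca U f b).
Proof.
apply: functional_extensionality => n; rewrite /lca /cadd /shift -big_split /=.
by apply: eq_bigr => u _; rewrite mulrDr.
Qed.

Lemma lca_zero (p D : nat) (U : seq (lattice D)) (f : lattice D -> 'F_p) : lca U f (@czero p D) = @czero p D.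
Proof.
apply: functional_extensionality => n; rewrite /lca /czero /shift.
by rewrite big1_seq // => u _; rewrite mulr0.
Qed.

Lemma iter_add (p D : nat) (U : seq (lattice D)) (f : lattice D -> 'F_p) j a b :
  iter j (lca U f) (cadd a b) = cadd (iter j (lca U f) a) (iter j (lca U f) b).
Proof. by elim: j => //= j ->; rewrite lca_add. Qed.

Lemma iter_zero (p D : nat) (U : seq (lattice D)) (f : lattice D -> 'F_p) j : iter j (lca U f) (@czero p D) = @czero p D.
Proof. by elim: j => //= j ->; rewrite lca_zero. Qed.

Lemma mhom_iter (p D : nat) (U : seq (lattice D)) (f : lattice D -> 'F_p) (psi : config p D -> algC) j :
  mhom psi -> mhom (fun a => psi (iter j (lca U f) a)).
Proof.
by case=> h0 hD; split; [rewrite iter_zero | move=> a b; rewrite iter_add hD].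
Qed.

Lemma delta_add (p D : nat) (m : lattice D) (x y : 'F_p) : delta m (x + y) = cadd (delta m x) (delta m y).
Proof.
apply: functional_extensionality => n; rewrite /delta /cadd.
by case: (n == m); rewrite ?addr0.
Qed.

Lemma delta0 (p D : nat) (m : lattice D) : delta m (0 : 'F_p) = @czero p D.
Proof. by apply: functional_extensionality => n; rewrite /delta /czero; case: (n == m). Qed.

Lemma mhom_delta_nat (p D : nat) (psi : config p D -> algC) m k :
  mhom psi -> psi (delta m k%:R) = psi (delta m 1) ^+ k.
Proof.
case=> h0 hD; elim: k => [|k IH]; first by rewrite delta0 h0 expr0.
by rewrite mulrS delta_add hD IH exprS.
Qed.

Lemma mhom_delta (p D : nat) (psi : config p D -> algC) m (x : 'F_p) :
  mhom psi -> psi (delta m x) = psi (delta m 1) ^+ (nat_of_ord x).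
Proof. by move=> h; rewrite -mhom_delta_nat // natr_Zp. Qed.

Lemma mhom_p (p D : nat) (psi : config p D -> algC) m :
  prime p -> mhom psi -> psi (delta m 1) ^+ p = 1.
Proof. by move=> pp h; rewrite -mhom_delta_nat // pchar_Fp_0 // delta0; case: h. Qed.

Lemma mhom_sum (p D : nat) (psi : config p D -> algC) (T : Type) (s : seq T) (g : T -> config p D) :
  mhom psi -> psi (fun n => \sum_(t <- s) g t n) = \prod_(t <- s) psi (g t).
Proof.
case=> h0 hD; elim: s => [|t s IH].
  have -> : (fun n => \sum_(t <- [::]) g t n) = @czero p D.
    by apply: functional_extensionality => n; rewrite big_nil.
  by rewrite big_nil.
rewrite big_cons -IH -hD.
have -> : (fun n => \sum_(t0 <- t :: s) g t0 n) = cadd (g t) (fun n => \sum_(t0 <- s) g t0 n).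
  by apply: functional_extensionality => n; rewrite big_cons.
by [].
Qed.

Lemma lca_delta (p D : nat) (U : seq (lattice D)) (f : lattice D -> 'F_p) (m : lattice D) :
  lca U f (delta m 1) = fun n => \sum_(u <- U) delta (m - u) (f u) n.
Proof.
apply: functional_extensionality => n; rewrite /lca /shift; apply: eq_bigr => u _.
rewrite /delta; have -> : (u + n == m) = (n == m - u).
  by rewrite [RHS]eq_sym subr_eq addrC eq_sym.
by case: (n == m - u); rewrite ?mulr1 ?mulr0.
Qed.

Lemma psi_step (p D : nat) (U : seq (lattice D)) (f : lattice D -> 'F_p) (psi : config p D -> algC) m :
  mhom psi -> psi (lca U f (delta m 1)) = \prod_(u <- U) psi (delta (m - u) 1) ^+ (nat_of_ord (f u)).
Proof.
move=> h; rewrite lca_delta mhom_sum //; apply: eq_bigr => u _; exact: mhom_delta.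
Qed.

Lemma char_eval_delta (p D : nat) (chi : lattice D -> 'F_p -> algC) S m x :
  uniq S -> (forall n, is_charA (chi n)) ->
  char_eval chi S (delta m x) = if m \in S then chi m x else 1.
Proof.
move=> uS hc; rewrite /char_eval; case: ifP => mS.
  rewrite (bigD1_seq m) //= /delta eqxx big1 ?mulr1 // => n nm.
  by rewrite (negbTE nm) charA0.
rewrite big1_seq // => n /andP[_ nS]; rewrite /delta.
have -> : (n == m) = false by apply/negbTE; apply: contraFN mS => /eqP <-.
exact: charA0.
Qed.

Local Close Scope ring_scope.
Local Open Scope ring_scope.

Definition zpow (p : nat) (z : algC) (x : 'F_p) : algC := z ^+ (nat_of_ord x).
Definition lg (p : nat) (z w : algC) : 'F_p := odflt 0 [pick x : 'F_p | z ^+ (nat_of_ord x) == w].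

Lemma val_Fp_lt (p : nat) (x : 'F_p) : prime p -> (nat_of_ord x < p)%N.
Proof. by move=> pp; apply: (leq_trans (ltn_ord x)); rewrite Fp_cast. Qed.

Lemma zpow_lg (p : nat) (z w : algC) : prime p -> p.-primitive_root z -> w ^+ p = 1 ->
  zpow z (lg p z w) = w.
Proof.
move=> pp hz hw; rewrite /zpow /lg; case: pickP => [x /eqP //|h].
have [i ei] := prim_rootP hz hw.
have ip : (i < (Zp_trunc (pdiv p)).+2)%N by rewrite Fp_cast.
by have := h (Ordinal ip); rewrite /= ei eqxx.
Qed.

Lemma zpow_inj (p : nat) (z : algC) (x y : 'F_p) : prime p -> p.-primitive_root z ->
  zpow z x = zpow z y -> x = y.
Proof.
move=> pp hz /eqP; rewrite /zpow (eq_prim_root_expr hz) => /eqP.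
rewrite !modn_small ?val_Fp_lt // => e; exact: val_inj.
Qed.

Lemma zpow0 (p : nat) (z : algC) : zpow z (0 : 'F_p) = 1.
Proof. by rewrite /zpow expr0. Qed.

Lemma zpowD (p : nat) (z : algC) (x y : 'F_p) : prime p -> p.-primitive_root z ->
  zpow z (x + y) = zpow z x * zpow z y.
Proof.
move=> pp hz; rewrite /zpow -exprD -(prim_expr_mod hz (nat_of_ord x + nat_of_ord y)).
by rewrite -{1}(natr_Zp x) -{1}(natr_Zp y) -natrD val_Fp_nat.
Qed.

Lemma zpowM (p : nat) (z : algC) (x y : 'F_p) : prime p -> p.-primitive_root z ->
  zpow z (x * y) = zpow z x ^+ (nat_of_ord y).
Proof.
move=> pp hz; rewrite /zpow -exprM -(prim_expr_mod hz (nat_of_ord x * nat_of_ord y)).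
by rewrite -{1}(natr_Zp x) -{1}(natr_Zp y) -natrM val_Fp_nat.
Qed.

Lemma zpow_sum (p : nat) (z : algC) (T : Type) (s : seq T) (g : T -> 'F_p) :
  prime p -> p.-primitive_root z -> zpow z (\sum_(t <- s) g t) = \prod_(t <- s) zpow z (g t).
Proof.
move=> pp hz; elim: s => [|t s IH]; first by rewrite !big_nil zpow0.
by rewrite !big_cons zpowD // IH.
Qed.

Definition psiJ (p D : nat) (U : seq (lattice D)) (f : lattice D -> 'F_p)
  (chi : lattice D -> 'F_p -> algC) (S : seq (lattice D)) (j : nat) (a : config p D) : algC :=
  char_eval chi S (iter j (lca U f) a).

Definition cJ (p D : nat) (U : seq (lattice D)) (f : lattice D -> 'F_p)
  (chi : lattice D -> 'F_p -> algC) (S : seq (lattice D)) (z : algC) (j : nat) (m : lattice D) : 'F_p :=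
  lg p z (psiJ U f chi S j (delta m 1)).

Lemma psiJ_mhom (p D : nat) (U : seq (lattice D)) (f : lattice D -> 'F_p) chi S j :
  (forall n, is_charA (chi n)) -> mhom (psiJ U f chi S j).
Proof. by move=> hc; apply: mhom_iter; apply: char_eval_mhom. Qed.

Lemma zpow_cJ (p D : nat) (U : seq (lattice D)) (f : lattice D -> 'F_p) chi S z j m :
  prime p -> p.-primitive_root z -> (forall n, is_charA (chi n)) ->
  zpow z (cJ U f chi S z j m) = psiJ U f chi S j (delta m 1).
Proof. by move=> pp hz hc; apply: zpow_lg => //; apply: mhom_p => //; apply: psiJ_mhom. Qed.

Lemma cJ_rec (p D : nat) (U : seq (lattice D)) (f : lattice D -> 'F_p) chi S z j m :
  prime p -> p.-primitive_root z -> (forall n, is_charA (chi n)) ->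
  cJ U f chi S z j.+1 m = \sum_(u <- U) f u * cJ U f chi S z j (m - u).
Proof.
move=> pp hz hc; apply: (zpow_inj pp hz); rewrite zpow_cJ // zpow_sum //.
have -> : psiJ U f chi S j.+1 (delta m 1) = psiJ U f chi S j (lca U f (delta m 1)).
  by rewrite /psiJ iterSr.
rewrite psi_step; last exact: psiJ_mhom.
apply: eq_bigr => u _.
by rewrite mulrC zpowM // zpow_cJ.
Qed.

Lemma cJ_nz (p D : nat) (U : seq (lattice D)) (f : lattice D -> 'F_p) chi S z j m :
  prime p -> p.-primitive_root z -> (forall n, is_charA (chi n)) ->
  (cJ U f chi S z j m != 0) = (psiJ U f chi S j (delta m 1) != 1).
Proof.
move=> pp hz hc; rewrite -(@zpow_cJ p D U f chi S z j m pp hz hc); congr negb; apply/eqP/eqP => [->|h].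
  exact: zpow0.
by apply: (zpow_inj pp hz); rewrite h zpow0.
Qed.

Lemma rank_ge (p D : nat) (psi : config p D -> algC) chi' S' (Lm : seq (lattice D)) :
  char_family chi' S' -> (forall a, psi a = char_eval chi' S' a) -> uniq Lm ->
  (forall m, m \in Lm -> psi (delta m 1) != 1) -> (size Lm <= fam_rank chi' S')%N.
Proof.
case=> uS hc _ hpsi uL hL; rewrite /fam_rank -size_filter.
apply: uniq_leq_size => // m mL; have := hL m mL.
rewrite hpsi char_eval_delta //; case: ifP => mS; last by rewrite eqxx.
move=> h1; rewrite mem_filter mS andbT; apply/negP => /forallP /(_ 1) /eqP.
by move/eqP: h1.
Qed.

Local Close Scope ring_scope.
Local Open Scope ring_scope.

Lemma step_rep (p D : nat) (U : seq (lattice D)) (f : lattice D -> 'F_p)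
  (chi : lattice D -> 'F_p -> algC) (S : seq (lattice D)) :
  char_family chi S -> exists chi' S', char_family chi' S' /\
    forall a, char_eval chi S (lca U f a) = char_eval chi' S' a.
Proof.
case=> uS hc htriv.
pose S' := undup [seq u + n | n <- S, u <- U].
pose chi' := fun (m : lattice D) (b : 'F_p) =>
  \prod_(n <- S) \prod_(u <- U) (if u + n == m then chi n (f u * b) else 1).
have inS' : forall n u, n \in S -> u \in U -> u + n \in S'.
  by move=> n u nS uU; rewrite mem_undup; apply/allpairsP; exists (n, u).
exists chi', S'; split.
  split; first exact: undup_uniq.
    move=> m; split.
      rewrite /chi' big1_seq // => n _; rewrite big1_seq // => u _.
      by case: ifP => //; rewrite mulr0 charA0.
    move=> a b; rewrite /chi' -big_split; apply: eq_bigr => n _.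
    rewrite -big_split; apply: eq_bigr => u _.
    case: ifP => _ /=; last by rewrite mulr1.
    transitivity (chi n (f u * a + f u * b)); first by congr (chi n _); apply: mulrDr.
    exact: charAD.
  move=> m mS; apply/forallP => b; apply/eqP; rewrite /chi' big1_seq // => n /andP[_ nS].
  rewrite big1_seq // => u /andP[_ uU]; case: ifP => // /eqP e.
  by move: mS; rewrite -e inS'.
move=> a; rewrite /char_eval /lca /shift /chi'.
rewrite exchange_big /=; apply: eq_big_seq => n nS.
rewrite charA_sum // exchange_big /=; apply: eq_big_seq => u uU.
rewrite (bigD1_seq (u + n)) ?undup_uniq ?inS' //= eqxx big1 ?mulr1 // => m.
by rewrite eq_sym => /negbTE ->.
Qed.

Lemma iter_rep (p D : nat) (U : seq (lattice D)) (f : lattice D -> 'F_p)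
  (chi : lattice D -> 'F_p -> algC) (S : seq (lattice D)) :
  char_family chi S -> forall j, exists chi' S', char_family chi' S' /\
    forall a, psiJ U f chi S j a = char_eval chi' S' a.
Proof.
move=> hf; elim=> [|j [chi1 [S1 [hf1 h1]]]]; first by exists chi, S.
have [chi2 [S2 [hf2 h2]]] := step_rep U f hf1.
by exists chi2, S2; split => // a; rewrite /psiJ iterSr -h2 -h1.
Qed.

Local Close Scope ring_scope.
Local Open Scope ring_scope.

Definition lam (D : nat) (w : 'I_D -> int) (m : lattice D) : int := \sum_(i < D) m 0 i * w i.

Lemma lamD (D : nat) (w : 'I_D -> int) (m u : lattice D) : lam w (m + u) = lam w m + lam w u.
Proof. by rewrite /lam -big_split /=; apply: eq_bigr => i _; rewrite mxE mulrDl. Qed.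

Lemma digits_zero (n : nat) (K : int) (v : 'I_n -> int) : 0 < K -> (forall i, `|v i| < K) ->
  \sum_(i < n) v i * K ^+ i = 0 -> forall i, v i = 0.
Proof.
move=> K0; elim: n v => [|n IH] v hv hs i; first by case: i.
move: hs; rewrite big_ord_recl expr0 mulr1.
set R := \sum_(i < n) _ => hs.
have eR : R = K * \sum_(i < n) v (lift ord0 i) * K ^+ i.
  rewrite /R mulr_sumr; apply: eq_bigr => j _; rewrite /bump /= exprS; ring.
have R0 : \sum_(i < n) v (lift ord0 i) * K ^+ i = 0.
  apply/eqP; apply/negP => /negP hn.
  have h1 : 0 < `|\sum_(i < n) v (lift ord0 i) * K ^+ i| by rewrite normr_gt0.
  have h2 : `|v ord0| = K * `|\sum_(i < n) v (lift ord0 i) * K ^+ i|.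
    have -> : v ord0 = - R by rewrite -[LHS]subr0 -hs; ring.
    by rewrite normrN eR normrM gtr0_norm.
  have := hv ord0; rewrite h2; move: h1.
  set Y := `|_|; move=> h1 h3.
  have : K * 1 <= K * Y by rewrite ler_pM2l //; rewrite -ltzD1 add0r in h1; lia.
  lia.
have v0 : v ord0 = 0 by move: hs; rewrite eR R0 mulr0 addr0.
case: (unliftP ord0 i) => [j ->|->] //.
by apply: (IH (fun j => v (lift ord0 j))) => // j0; apply: hv.
Qed.

Lemma sum_le_seq (T : eqType) (s : seq T) (x : T) (g : T -> int) :
  (forall y, 0 <= g y) -> x \in s -> g x <= \sum_(y <- s) g y.
Proof.
move=> g0 xs; rewrite (big_rem x xs) /=; rewrite lerDl; apply: sumr_ge0 => y _; exact: g0.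
Qed.

Lemma lam_inj_exists (D : nat) (X : seq (lattice D)) :
  exists w : 'I_D -> int, {in X &, injective (lam w)}.
Proof.
pose B := \sum_(x <- X) \sum_(i < D) `|x 0 i|.
pose K := 2 * B + 1.
have B0 : 0 <= B by apply: sumr_ge0 => x _; apply: sumr_ge0 => i _.
have hB : forall x i, x \in X -> `|x 0 i| <= B.
  move=> x i xX.
  have h := @sum_le_seq _ X x (fun y => \sum_(i < D) `|y 0 i|)
    (fun y => sumr_ge0 _ (fun i _ => normr_ge0 _)) xX.
  apply: le_trans h; rewrite (bigD1 i) //= lerDl sumr_ge0 // => j _.
have K0 : 0 < K by rewrite /K; lia.
exists (fun i => K ^+ i) => x y xX yX e.
have hs : \sum_(i < D) (x 0 i - y 0 i) * K ^+ i = 0.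
  have -> : \sum_(i < D) (x 0 i - y 0 i) * K ^+ i = lam (fun i => K ^+ i) x - lam (fun i => K ^+ i) y.
    by rewrite /lam -sumrB; apply: eq_bigr => i _; rewrite mulrBl.
  by rewrite e subrr.
have hv : forall i, `|x 0 i - y 0 i| < K.
  move=> i; apply: le_lt_trans (ler_normB _ _) _.
  have := hB x i xX; have := hB y i yX; rewrite /K; lia.
have := digits_zero K0 hv hs => h0.
by apply/rowP => i; apply/eqP; rewrite -subr_eq0 h0.
Qed.

Local Close Scope ring_scope.
Local Open Scope ring_scope.

Definition Polyof (p D : nat) (w : 'I_D -> int) (X : seq (lattice D)) (g : lattice D -> 'F_p)
  (A : int) : {poly 'F_p} := \sum_(x <- X) g x *: 'X^(absz (lam w x - A)).

Lemma coef_Polyof (p D : nat) (w : 'I_D -> int) (X : seq (lattice D)) (g : lattice D -> 'F_p)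
  (A : int) (e : nat) : (forall x, x \in X -> A <= lam w x) ->
  (Polyof w X g A)`_e = \sum_(x <- X | lam w x == e%:Z + A) g x.
Proof.
move=> hA; rewrite coef_sum [RHS]big_mkcond; apply: eq_big_seq => x xX.
rewrite coefZ coefXn.
have h := gez0_abs (_ : 0 <= lam w x - A); rewrite subr_ge0 in h; have {h} h := h (hA x xX).
have -> : (e == absz (lam w x - A)) = (lam w x == e%:Z + A).
  apply/eqP/eqP => [->|he]; first by rewrite h; ring.
  by apply/eqP; rewrite -eqz_nat h he addrK.
by case: ifP; rewrite ?mulr1 ?mulr0.
Qed.

Fixpoint Tj (D : nat) (S U : seq (lattice D)) (j : nat) : seq (lattice D) :=
  if j is j'.+1 then undup [seq m + u | m <- Tj S U j', u <- U] else S.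

Lemma Tj_uniq (D : nat) (S U : seq (lattice D)) j : uniq S -> uniq (Tj S U j).
Proof. by case: j => //= j _; exact: undup_uniq. Qed.

Lemma Tj_step (D : nat) (S U : seq (lattice D)) j m u :
  m \in Tj S U j -> u \in U -> m + u \in Tj S U j.+1.
Proof. by move=> mT uU /=; rewrite mem_undup; apply/allpairsP; exists (m, u). Qed.

Lemma Tj_inv (D : nat) (S U : seq (lattice D)) j m' :
  m' \in Tj S U j.+1 -> exists m u, [/\ m \in Tj S U j, u \in U & m' = m + u].
Proof.
by rewrite /= mem_undup => /allpairsP[[m u] [/= mT uU ->]]; exists m, u.
Qed.

Lemma sum_eq_supp (T : eqType) (V : zmodType) (s1 s2 : seq T) (h : T -> V) :
  uniq s1 -> uniq s2 -> (forall x, h x != 0 -> (x \in s1) && (x \in s2)) ->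
  \sum_(x <- s1) h x = \sum_(x <- s2) h x.
Proof.
move=> u1 u2 H.
have e : forall s, \sum_(x <- s) h x = \sum_(x <- [seq x <- s | h x != 0]) h x.
  move=> s; rewrite big_filter [RHS]big_mkcond; apply: eq_bigr => x _.
  by case: (h x =P 0) => [->|].
rewrite (e s1) (e s2); apply: perm_big; apply: uniq_perm; rewrite ?filter_uniq //.
move=> x; rewrite !mem_filter; case hx: (h x != 0) => //=.
by have /andP[-> ->] := H x hx.
Qed.

Lemma proj (p D : nat) (w : 'I_D -> int) (S U : seq (lattice D)) (f : lattice D -> 'F_p)
  (c : nat -> lattice D -> 'F_p) (A B : int) :
  uniq S -> (forall u, u \in U -> A <= lam w u) -> (forall n, n \in S -> B <= lam w n) ->
  (forall m, c 0%N m != 0 -> m \in S) ->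
  (forall j m, c j.+1 m = \sum_(u <- U) f u * c j (m - u)) ->
  [/\ forall j m, c j m != 0 -> m \in Tj S U j,
      forall j m, m \in Tj S U j -> B + j%:Z * A <= lam w m &
      forall j e, (Polyof w S (c 0%N) B * Polyof w U f A ^+ j)`_e =
        \sum_(m <- Tj S U j | lam w m == e%:Z + (B + j%:Z * A)) c j m].
Proof.
move=> uS hA hB hc0 hrec.
have oS : forall j : nat, B + (j.+1)%:Z * A = (B + j%:Z * A) + A.
  by move=> j; rewrite -addn1 PoszD mulrDl mul1r addrA.
have hsupp : forall j m, c j m != 0 -> m \in Tj S U j.
  elim=> [|j IH] m; first exact: hc0.
  rewrite hrec => hm.
  case: (boolP (has (fun u => f u * c j (m - u) != 0) U)) => [/hasP[u uU hu]|/hasPn hn].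
    have cu : c j (m - u) != 0 by apply: contraNneq hu => ->; rewrite mulr0.
    by rewrite -(subrK u m); apply: Tj_step => //; apply: IH.
  by move: hm; rewrite big1_seq ?eqxx // => u /andP[_ uU]; apply/eqP; rewrite -[_ == _]negbK hn.
have hlam : forall j m, m \in Tj S U j -> B + j%:Z * A <= lam w m.
  elim=> [|j IH] m; first by rewrite mul0r addr0; apply: hB.
  move/Tj_inv => [m0 [u [m0T uU ->]]]; rewrite lamD oS.
  by apply: lerD; [apply: IH | apply: hA].
split => // j; elim: j => [|j IH] e.
  by rewrite expr0 mulr1 coef_Polyof // mul0r addr0.
rewrite exprSr mulrA; set R0 := (Polyof w S (c 0%N) B * _).
rewrite /Polyof mulr_sumr coef_sum.
under [RHS]eq_bigr do rewrite hrec.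
rewrite exchange_big /=; apply: eq_big_seq => u uU.
rewrite -scalerAr coefZ coefMXn -mulr_sumr; congr (_ * _).
set k := absz (lam w u - A).
have hu : lam w u = A + k%:Z.
  by rewrite /k gez0_abs ?subr_ge0 ?hA //; ring.
rewrite [RHS]big_mkcond /= (sum_eq_supp (s2 := [seq m + u | m <- Tj S U j])).
- rewrite big_map; under eq_bigr => m _ do rewrite addrK.
  case: ltnP => ek.
    rewrite big1_seq // => m /andP[_ mT]; case: ifP => // /eqP h.
    have := hlam j m mT; move: h; rewrite lamD oS hu; lia.
  rewrite /R0 IH big_mkcond; apply: eq_big_seq => m mT.
  have -> : (lam w (m + u) == e%:Z + (B + (j.+1)%:Z * A)) = (lam w m == (e - k)%N%:Z + (B + j%:Z * A)).
    rewrite lamD oS hu -subzn //; apply/eqP/eqP; lia.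
  by [].
- exact: undup_uniq.
- by rewrite map_inj_uniq ?Tj_uniq //; exact: addIr.
- move=> x; case: ifP => // _ hx.
  have xT := hsupp _ _ hx.
  rewrite -{1}(subrK u x) Tj_step //=; apply/mapP; exists (x - u) => //.
  by rewrite subrK.
Qed.

Local Close Scope ring_scope.
Local Open Scope ring_scope.

Lemma cnt_le (p D : nat) (w : 'I_D -> int) (S U : seq (lattice D)) (f : lattice D -> 'F_p)
  (c : nat -> lattice D -> 'F_p) (A B : int) :
  uniq S -> (forall u, u \in U -> A <= lam w u) -> (forall n, n \in S -> B <= lam w n) ->
  (forall m, c 0%N m != 0 -> m \in S) ->
  (forall j m, c j.+1 m = \sum_(u <- U) f u * c j (m - u)) ->
  forall j, (cnt (Polyof w S (c 0%N) B * Polyof w U f A ^+ j) <=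
             size [seq m <- Tj S U j | (c j m != 0)%R])%N.
Proof.
move=> uS hA hB hc0 hrec j.
have [_ _ hco] := proj uS hA hB hc0 hrec.
set L := [seq m <- Tj S U j | c j m != 0].
rewrite /cnt -(size_map (fun m => absz (lam w m - (B + j%:Z * A))%R)).
apply: uniq_leq_size; first exact: supp_uniq.
move=> e; rewrite mem_supp hco => hs.
case: (boolP (has (fun m => (lam w m == e%:Z + (B + j%:Z * A)) && (c j m != 0)) (Tj S U j))).
  move/hasP => [m mT /andP[/eqP hm cm]]; apply/mapP; exists m.
    by rewrite mem_filter cm.
  by rewrite hm addrK.
move/hasPn => hn; move: hs; rewrite big1_seq ?eqxx // => m /andP[hm mT].
by have := hn m mT; rewrite hm /= negbK => /eqP.
Qed.

Lemma coef_Polyof_at (p D : nat) (w : 'I_D -> int) (X : seq (lattice D)) (g : lattice D -> 'F_p)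
  (A : int) (x0 : lattice D) :
  uniq X -> {in X &, injective (lam w)} -> (forall x, x \in X -> A <= lam w x) -> x0 \in X ->
  (Polyof w X g A)`_(absz (lam w x0 - A)) = g x0.
Proof.
move=> uX winj hA x0X; rewrite coef_Polyof // gez0_abs ?subr_ge0 ?hA // subrK.
rewrite big_mkcond (bigD1_seq x0) //= eqxx big1_seq ?addr0 // => x /andP[xx0 xX].
case: ifP => // /eqP h; by move: xx0; rewrite (winj _ _ xX x0X h) eqxx.
Qed.

Lemma seq_min (T : eqType) (s : seq T) (g : T -> int) : s != [::] ->
  exists2 x, x \in s & forall y, y \in s -> g x <= g y.
Proof.
elim: s => // a s IH _; case: (eqVneq s [::]) => [->|sn].
  by exists a; rewrite ?mem_head // => y; rewrite inE => /eqP ->.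
have [x xs hx] := IH sn.
case: (lerP (g a) (g x)) => h.
  exists a; first exact: mem_head.
  move=> y; rewrite inE => /orP[/eqP -> //|ys]; exact: le_trans h (hx y ys).
exists x; first by rewrite inE xs orbT.
move=> y; rewrite inE => /orP[/eqP ->|ys]; [exact: ltW | exact: hx].
Qed.

Local Close Scope ring_scope.

Theorem theorem5p1 (p D : nat) (U : seq (lattice D)) (f : lattice D -> 'F_p) :
  prime p -> (1 <= D)%N -> uniq U -> nontrivial_lca U f ->
  diffusive_in_density (lca U f).
Proof.
move=> pp _ uU [u1 [v1 [u1U v1U uv f1 f2]]] chi S hfam rpos.
have [z hz] := C_prim_root_exists (prime_gt0 pp).
have hc : forall n, is_charA (chi n) by case: hfam.
have uS : uniq S by case: hfam.
pose U' := [seq u <- U | (f u != 0)%R].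
have uU' : uniq U' by rewrite filter_uniq.
pose c := cJ U f chi S z.
have hrec : forall j m, c j.+1 m = (\sum_(u <- U') f u * c j (m - u))%R.
  move=> j m; rewrite /c cJ_rec // big_filter [RHS]big_mkcond; apply: eq_bigr => u _.
  by case: (f u =P 0%R) => [->|]; rewrite ?mul0r.
have hc0 : forall m, (c 0%N m != 0)%R -> m \in S.
  move=> m; rewrite /c cJ_nz // /psiJ /= char_eval_delta //; case: ifP => //; by rewrite eqxx.
have [n0 n0S cn0] : exists2 n0, n0 \in S & (c 0%N n0 != 0)%R.
  move: rpos; rewrite /fam_rank -has_count => /hasP[n0 n0S /forallPn[a ha]].
  exists n0 => //; rewrite /c cJ_nz //; apply: contra ha => /eqP h1.
  have := @mhom_delta p D (psiJ U f chi S 0) n0 a (@psiJ_mhom p D U f chi S 0 hc).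
  rewrite h1 expr1n /psiJ /= char_eval_delta // n0S => ->; by [].
have [w winj] := lam_inj_exists (S ++ U').
have winjS : {in S &, injective (lam w)}.
  by move=> x y xS yS; apply: winj; rewrite mem_cat ?xS ?yS.
have winjU : {in U' &, injective (lam w)}.
  by move=> x y xS yS; apply: winj; rewrite mem_cat ?xS ?yS orbT.
have u1U' : u1 \in U' by rewrite mem_filter f1.
have v1U' : v1 \in U' by rewrite mem_filter f2.
have hU'n : U' != [::] by apply/eqP => e; move: u1U'; rewrite e.
have hSn : S != [::] by apply/eqP => e; move: n0S; rewrite e.
have [us usU hus] := @seq_min _ U' (lam w) hU'n.
have [ns nsS hns] := @seq_min _ S (lam w) hSn.
set A := lam w us; set B := lam w ns.
pose C := Polyof w S (c 0%N) B; pose P := Polyof w U' f A.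
have hcnt := cnt_le uS hus hns hc0 hrec.
have C0 : C != 0%R.
  apply/eqP => e; move: cn0; rewrite -(coef_Polyof_at (c 0%N) uS winjS hns n0S) -/C e.
  by rewrite coef0 eqxx.
have P0 : (P`_0 != 0)%R.
  have := coef_Polyof_at f uU' winjU hus usU; rewrite subrr /= -/P => ->.
  by move: usU; rewrite mem_filter => /andP[].
have sP : (1 < size P)%N.
  pose v := if u1 == us then v1 else u1.
  have vU : v \in U' by rewrite /v; case: ifP.
  have vus : v != us.
    rewrite /v; case: ifP => [/eqP <-|/negbT //]; by rewrite eq_sym.
  have hv := coef_Polyof_at f uU' winjU hus vU; rewrite -/P in hv.
  have k0 : (0 < absz (lam w v - A))%N.
    rewrite absz_gt0 subr_eq0; apply: contra vus => /eqP e; apply/eqP; exact: winjU.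
  have : absz (lam w v - A) \in supp P.
    by rewrite mem_supp hv; move: vU; rewrite mem_filter => /andP[].
  by move/supp_lt => h; apply: leq_ltn_trans k0 h.
have [Q [good [i0 [Q1 g0 gpos hpoly]]]] := poly_main pp C0 P0 sP.
have [J [hJ hJM]] := dens_main Q1 g0 gpos.
exists J; split => // M.
have [N0 hN0] := hJM (M + i0)%N.
exists N0 => j Jj jN0 psi.
have [n hn] := hN0 j Jj jN0.
split.
  have [chi' [S' [hf' hr']]] := iter_rep U f hfam j.
  by exists (fam_rank chi' S'), chi', S'; split => // a; exact: hr'.
move=> r [chi' [S' [hf' hr' <-]]].
apply: leq_trans (rank_ge hf' hr' (Lm := [seq m <- Tj S U' j | (c j m != 0)%R]) _ _).
- apply: (leq_trans _ (hcnt j)).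
  have h2 := hpoly j n; rewrite /C /P /A /B in h2.
  have h3 : (M < 2 ^ M)%N := @ltn_expl 2 M isT.
  have h4 : (M <= Gt Q good j n - i0)%N.
    rewrite leq_subRL; last by apply: leq_trans hn; exact: leq_addl.
    by rewrite addnC.
  have h5 : (2 ^ M <= 2 ^ (Gt Q good j n - i0))%N by rewrite leq_exp2l.
  exact: leq_trans (ltnW h3) (leq_trans h5 h2).
- by rewrite filter_uniq // Tj_uniq.
- move=> m; rewrite mem_filter => /andP[cm _]; move: cm.
  by rewrite /c cJ_nz.
Qed.
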